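(* Let $\alpha>0$, $\Omega=[0,1]^3$, and let $\boldsymbol m=(m_1,m_2,m_3)$ be a solution of $$\partial_t\boldsymbol m=-\boldsymbol m\times\Delta\boldsymbol m+\alpha\Delta\boldsymbol m+\alpha|\nabla\boldsymbol m|^2\boldsymbol m\ \text{ in }\Omega\times(0,T],\qquad\partial_{\mathbf n}\boldsymbol m=0\ \text{ on }\partial\Omega,$$ which is smooth up to the boundary (in particular $C^3$ in space up to $\partial\Omega$ with $\partial_z\partial_t\boldsymbol m$ continuous up to the boundary) and satisfies $|\boldsymbol m|=1$. Then $\partial_z^3\boldsymbol m=0$ on the boundary face $\{z=0\}$ (and analogously $\partial_x^3\boldsymbol m=0$ on $\{x=0\},\{x=1\}$, etc.). Consequently, for $h>0$ small and any fixed $x,y$, $\boldsymbol m(x,y,-\tfrac h2,t)=\boldsymbol m(x,y,\tfrac h2,t)+\mathcal O(h^5)$, where $\boldsymbol m$ is smoothly extended beyond the boundary.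
   Context: $|\nabla\boldsymbol m|^2=\sum_{i=1}^3|\nabla m_i|^2$; $\mathbf n$ is the outward unit normal. *)

(* Defs.v *)
From Stdlib Require Import Reals.
From Coquelicot Require Import Coquelicot.
Open Scope R_scope.

(* A scalar field of (x, y, z, t). A vector field m = (m1, m2, m3) is given
   by its three components. *)
Definition field := R -> R -> R -> R -> R.

Definition dx (f : field) : field := fun x y z t => Derive (fun u => f u y z t) x.
Definition dy (f : field) : field := fun x y z t => Derive (fun u => f x u z t) y.
Definition dz (f : field) : field := fun x y z t => Derive (fun u => f x y u t) z.
Definition dt (f : field) : field := fun x y z t => Derive (fun u => f x y z u) t.

Definition lap (f : field) : field :=
  fun x y z t => dx (dx f) x y z t + dy (dy f) x y z t + dz (dz f) x y z t.

Definition gradsq (f : field) : field :=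
  fun x y z t => (dx f x y z t)^2 + (dy f x y z t)^2 + (dz f x y z t)^2.

Definition gradsq3 (m1 m2 m3 : field) : field :=
  fun x y z t => gradsq m1 x y z t + gradsq m2 x y z t + gradsq m3 x y z t.

Definition in01 (s : R) : Prop := 0 <= s <= 1.

Definition llg_dom (T : R) (x y z t : R) : Prop :=
  in01 x /\ in01 y /\ in01 z /\ 0 < t <= T.

Definition open4 (U : R -> R -> R -> R -> Prop) : Prop :=
  forall x y z t, U x y z t -> exists delta, 0 < delta /\
    forall x' y' z' t', Rabs (x' - x) < delta -> Rabs (y' - y) < delta ->
      Rabs (z' - z) < delta -> Rabs (t' - t) < delta -> U x' y' z' t'.

Definition cont_on (U : R -> R -> R -> R -> Prop) (f : field) : Prop :=
  forall x y z t, U x y z t -> forall eps, 0 < eps -> exists delta, 0 < delta /\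
    forall x' y' z' t', Rabs (x' - x) < delta -> Rabs (y' - y) < delta ->
      Rabs (z' - z) < delta -> Rabs (t' - t) < delta ->
      Rabs (f x' y' z' t' - f x y z t) < eps.

Fixpoint Ck (k : nat) (U : R -> R -> R -> R -> Prop) (f : field) : Prop :=
  match k with
  | O => cont_on U f
  | S k' =>
      cont_on U f /\
      (forall x y z t, U x y z t ->
         ex_derive (fun u => f u y z t) x /\ ex_derive (fun u => f x u z t) y /\
         ex_derive (fun u => f x y u t) z /\ ex_derive (fun u => f x y z u) t) /\
      Ck k' U (dx f) /\ Ck k' U (dy f) /\ Ck k' U (dz f) /\ Ck k' U (dt f)
  end.

Definition smooth_on (U : R -> R -> R -> R -> Prop) (f : field) : Prop :=
  forall k, Ck k U f.

Definition LLG (alpha T : R) (m1 m2 m3 : field) : Prop :=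
  forall x y z t, llg_dom T x y z t ->
    let G := gradsq3 m1 m2 m3 x y z t in
    let a1 := m1 x y z t in let a2 := m2 x y z t in let a3 := m3 x y z t in
    let b1 := lap m1 x y z t in let b2 := lap m2 x y z t in
    let b3 := lap m3 x y z t in
    dt m1 x y z t = - (a2 * b3 - a3 * b2) + alpha * b1 + alpha * G * a1 /\
    dt m2 x y z t = - (a3 * b1 - a1 * b3) + alpha * b2 + alpha * G * a2 /\
    dt m3 x y z t = - (a1 * b2 - a2 * b1) + alpha * b3 + alpha * G * a3.

Definition neumann_bc (T : R) (f : field) : Prop :=
  (forall y z t, in01 y -> in01 z -> 0 < t <= T ->
     dx f 0 y z t = 0 /\ dx f 1 y z t = 0) /\
  (forall x z t, in01 x -> in01 z -> 0 < t <= T ->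
     dy f x 0 z t = 0 /\ dy f x 1 z t = 0) /\
  (forall x y t, in01 x -> in01 y -> 0 < t <= T ->
     dz f x y 0 t = 0 /\ dz f x y 1 t = 0).

Definition third_normal_zero (T : R) (f : field) : Prop :=
  (forall y z t, in01 y -> in01 z -> 0 < t <= T ->
     dx (dx (dx f)) 0 y z t = 0 /\ dx (dx (dx f)) 1 y z t = 0) /\
  (forall x z t, in01 x -> in01 z -> 0 < t <= T ->
     dy (dy (dy f)) x 0 z t = 0 /\ dy (dy (dy f)) x 1 z t = 0) /\
  (forall x y t, in01 x -> in01 y -> 0 < t <= T ->
     dz (dz (dz f)) x y 0 t = 0 /\ dz (dz (dz f)) x y 1 t = 0).

(* Main.v *)
Require Import Defs.
From Stdlib Require Import Reals Lra.
From Coquelicot Require Import Coquelicot.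
Open Scope R_scope.

Definition accum (S : R -> Prop) (a : R) : Prop :=
  forall d, 0 < d -> exists h, h <> 0 /\ Rabs h < d /\ S (a + h).

Lemma side_zero (f : R -> R) a l (S : R -> Prop) :
  is_derive f a l -> (forall s, S s -> f s = 0) -> S a -> accum S a -> l = 0.
Proof.
  intros Hd Hz Ha Hac. apply is_derive_Reals in Hd.
  destruct (Req_dec l 0) as [E|E]; [exact E|exfalso].
  destruct (Hd (Rabs l) (Rabs_pos_lt _ E)) as [dl Hdl].
  destruct (Hac dl (cond_pos dl)) as [h [Hh0 [Hh1 Hh2]]].
  specialize (Hdl h Hh0 Hh1). rewrite (Hz _ Hh2), (Hz _ Ha) in Hdl.
  replace ((0 - 0) / h - l) with (- l) in Hdl by (field; auto).
  rewrite Rabs_Ropp in Hdl. lra.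
Qed.

Lemma side_zeroD (f : R -> R) a (S : R -> Prop) :
  ex_derive f a -> (forall s, S s -> f s = 0) -> S a -> accum S a -> Derive f a = 0.
Proof.
  intros Hd. apply side_zero with (f := f) (a := a). now apply Derive_correct.
Qed.

Lemma accum01 a : in01 a -> accum in01 a.
Proof.
  unfold in01; intros Ha d Hd.
  assert (H0 : 0 < Rmin (d/2) (1/2)) by (apply Rmin_pos; lra).
  pose proof (Rmin_l (d/2) (1/2)). pose proof (Rmin_r (d/2) (1/2)).
  destruct (Rle_lt_dec a (1/2)).
  - exists (Rmin (d/2) (1/2)). rewrite Rabs_pos_eq by lra. repeat split; lra.
  - exists (- Rmin (d/2) (1/2)). rewrite Rabs_Ropp, Rabs_pos_eq by lra. repeat split; lra.
Qed.

Lemma accumT T a : 0 < a <= T -> accum (fun c => 0 < c <= T) a.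
Proof.
  intros Ha d Hd.
  assert (H0 : 0 < Rmin (d/2) (a/2)) by (apply Rmin_pos; lra).
  pose proof (Rmin_l (d/2) (a/2)). pose proof (Rmin_r (d/2) (a/2)).
  exists (- Rmin (d/2) (a/2)). rewrite Rabs_Ropp, Rabs_pos_eq by lra. repeat split; lra.
Qed.


Lemma sm_dx U f : smooth_on U f -> smooth_on U (dx f).
Proof. intros H k. destruct (H (S k)) as [_ [_ [a _]]]. exact a. Qed.
Lemma sm_dy U f : smooth_on U f -> smooth_on U (dy f).
Proof. intros H k. destruct (H (S k)) as [_ [_ [_ [a _]]]]. exact a. Qed.
Lemma sm_dz U f : smooth_on U f -> smooth_on U (dz f).
Proof. intros H k. destruct (H (S k)) as [_ [_ [_ [_ [a _]]]]]. exact a. Qed.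
Lemma sm_dt U f : smooth_on U f -> smooth_on U (dt f).
Proof. intros H k. destruct (H (S k)) as [_ [_ [_ [_ [_ a]]]]]. exact a. Qed.
Lemma sm_cont U f : smooth_on U f -> cont_on U f.
Proof. intros H. exact (H O). Qed.
Lemma sm_ex U f x y z t : smooth_on U f -> U x y z t ->
  ex_derive (fun u => f u y z t) x /\ ex_derive (fun u => f x u z t) y /\
  ex_derive (fun u => f x y u t) z /\ ex_derive (fun u => f x y z u) t.
Proof. intros H Hu. destruct (H 1%nat) as [_ [a _]]. exact (a _ _ _ _ Hu). Qed.


Lemma schwarz_xz U (HUo : open4 U) g x y z t : smooth_on U g -> U x y z t ->
  dx (dz g) x y z t = dz (dx g) x y z t.
Proof.
  intros Hg Hu.
  apply (Schwarz (fun u v => g u y v t) x z).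
  - destruct (HUo _ _ _ _ Hu) as [d [Hd HH]]. exists (mkposreal d Hd).
    intros u v H1 H2. simpl in H1, H2.
    assert (Hu' : U u y v t) by (apply HH; auto; rewrite Rminus_eq_0, Rabs_R0; auto).
    split; [|split; [|split]].
    + exact (proj1 (sm_ex _ _ _ _ _ _ Hg Hu')).
    + exact (proj1 (proj2 (proj2 (sm_ex _ _ _ _ _ _ Hg Hu')))).
    + exact (proj1 (sm_ex _ _ _ _ _ _ (sm_dz _ _ Hg) Hu')).
    + exact (proj1 (proj2 (proj2 (sm_ex _ _ _ _ _ _ (sm_dx _ _ Hg) Hu')))).
  - intros eps. destruct (sm_cont _ _ (sm_dx _ _ (sm_dz _ _ Hg)) _ _ _ _ Hu eps (cond_pos eps)) as [d [Hd HH]].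
    exists (mkposreal d Hd). intros u v H1 H2. apply HH; auto; rewrite Rminus_eq_0, Rabs_R0; auto.
  - intros eps. destruct (sm_cont _ _ (sm_dz _ _ (sm_dx _ _ Hg)) _ _ _ _ Hu eps (cond_pos eps)) as [d [Hd HH]].
    exists (mkposreal d Hd). intros u v H1 H2. apply HH; auto; rewrite Rminus_eq_0, Rabs_R0; auto.
Qed.

Ltac exd Hg Hu' := first
  [ destruct (sm_ex _ _ _ _ _ _ Hg Hu') as (?&?&?&?); assumption
  | destruct (sm_ex _ _ _ _ _ _ (sm_dz _ _ Hg) Hu') as (?&?&?&?); assumption
  | destruct (sm_ex _ _ _ _ _ _ (sm_dx _ _ Hg) Hu') as (?&?&?&?); assumption
  | destruct (sm_ex _ _ _ _ _ _ (sm_dy _ _ Hg) Hu') as (?&?&?&?); assumption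
  | destruct (sm_ex _ _ _ _ _ _ (sm_dt _ _ Hg) Hu') as (?&?&?&?); assumption ].

Lemma schwarz_yz U (HUo : open4 U) g x y z t : smooth_on U g -> U x y z t ->
  dy (dz g) x y z t = dz (dy g) x y z t.
Proof.
  intros Hg Hu.
  apply (Schwarz (fun u v => g x u v t) y z).
  - destruct (HUo _ _ _ _ Hu) as [d [Hd HH]]. exists (mkposreal d Hd).
    intros u v H1 H2. simpl in H1, H2.
    assert (Hu' : U x u v t) by (apply HH; auto; rewrite Rminus_eq_0, Rabs_R0; auto).
    split; [|split; [|split]]; exd Hg Hu'.
  - intros eps. destruct (sm_cont _ _ (sm_dy _ _ (sm_dz _ _ Hg)) _ _ _ _ Hu eps (cond_pos eps)) as [d [Hd HH]].
    exists (mkposreal d Hd). intros u v H1 H2. apply HH; auto; rewrite Rminus_eq_0, Rabs_R0; auto.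
  - intros eps. destruct (sm_cont _ _ (sm_dz _ _ (sm_dy _ _ Hg)) _ _ _ _ Hu eps (cond_pos eps)) as [d [Hd HH]].
    exists (mkposreal d Hd). intros u v H1 H2. apply HH; auto; rewrite Rminus_eq_0, Rabs_R0; auto.
Qed.

Lemma schwarz_tz U (HUo : open4 U) g x y z t : smooth_on U g -> U x y z t ->
  dt (dz g) x y z t = dz (dt g) x y z t.
Proof.
  intros Hg Hu.
  apply (Schwarz (fun u v => g x y v u) t z).
  - destruct (HUo _ _ _ _ Hu) as [d [Hd HH]]. exists (mkposreal d Hd).
    intros u v H1 H2. simpl in H1, H2.
    assert (Hu' : U x y v u) by (apply HH; auto; rewrite Rminus_eq_0, Rabs_R0; auto).
    split; [|split; [|split]]; exd Hg Hu'.
  - intros eps. destruct (sm_cont _ _ (sm_dt _ _ (sm_dz _ _ Hg)) _ _ _ _ Hu eps (cond_pos eps)) as [d [Hd HH]].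
    exists (mkposreal d Hd). intros u v H1 H2. apply HH; auto; rewrite Rminus_eq_0, Rabs_R0; auto.
  - intros eps. destruct (sm_cont _ _ (sm_dz _ _ (sm_dt _ _ Hg)) _ _ _ _ Hu eps (cond_pos eps)) as [d [Hd HH]].
    exists (mkposreal d Hd). intros u v H1 H2. apply HH; auto; rewrite Rminus_eq_0, Rabs_R0; auto.
Qed.




Lemma isd_plus3 (P Q R : R -> R) z dP dQ dR l : is_derive P z dP -> is_derive Q z dQ ->
  is_derive R z dR -> dP + dQ + dR = l -> is_derive (fun u => P u + Q u + R u) z l.
Proof.
  intros HP HQ HR E. subst l.
  apply (is_derive_plus (fun u => P u + Q u) R). apply (is_derive_plus P Q); auto. auto.
Qed.

Lemma isd_sq (f : R -> R) z df : is_derive f z df -> f z * df = 0 -> is_derive (fun u => f u ^ 2) z 0.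
Proof.
  intros H E.
  assert (H2 : is_derive (fun u => f u * f u) z (df * f z + f z * df)).
  { apply (is_derive_mult f f); auto. intros; apply Rmult_comm. }
  replace 0 with (df * f z + f z * df) by lra.
  eapply is_derive_ext; [|exact H2]. intros u; simpl; ring.
Qed.

Lemma derivE (D A1 A2 A3 B1 B2 B3 G : R -> R) alpha z dD dA1 dA2 dA3 dB1 dB2 dB3 dG :
  is_derive D z dD -> is_derive A1 z dA1 -> is_derive A2 z dA2 -> is_derive A3 z dA3 ->
  is_derive B1 z dB1 -> is_derive B2 z dB2 -> is_derive B3 z dB3 -> is_derive G z dG ->
  is_derive (fun u => D u - (- (A2 u * B3 u - A3 u * B2 u) + alpha * B1 u + alpha * G u * A1 u)) z
    (dD - (- (dA2 * B3 z + A2 z * dB3 - (dA3 * B2 z + A3 z * dB2)) + alpha * dB1 + alpha * (dG * A1 z + G z * dA1))).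
Proof.
  intros HD H1 H2 H3 K1 K2 K3 HG.
  assert (eD : Derive (fun x : R => D x) z = dD) by (apply is_derive_unique; exact HD).
  assert (eA1 : Derive (fun x : R => A1 x) z = dA1) by (apply is_derive_unique; exact H1).
  assert (eA2 : Derive (fun x : R => A2 x) z = dA2) by (apply is_derive_unique; exact H2).
  assert (eA3 : Derive (fun x : R => A3 x) z = dA3) by (apply is_derive_unique; exact H3).
  assert (eB1 : Derive (fun x : R => B1 x) z = dB1) by (apply is_derive_unique; exact K1).
  assert (eB2 : Derive (fun x : R => B2 x) z = dB2) by (apply is_derive_unique; exact K2).
  assert (eB3 : Derive (fun x : R => B3 x) z = dB3) by (apply is_derive_unique; exact K3).
  assert (eG : Derive (fun x : R => G x) z = dG) by (apply is_derive_unique; exact HG).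
  auto_derive.
  - repeat split; eexists; eauto.
  - rewrite eD, eA1, eA2, eA3, eB1, eB2, eB3, eG. ring.
Qed.



Lemma face_facts U T m z0 : open4 U -> (forall x y z t, llg_dom T x y z t -> U x y z t) ->
  smooth_on U m -> in01 z0 ->
  (forall a b c, in01 a -> in01 b -> 0 < c <= T -> dz m a b z0 c = 0) ->
  forall a b c, in01 a -> in01 b -> 0 < c <= T ->
  dz (dx m) a b z0 c = 0 /\ dz (dy m) a b z0 c = 0 /\ dz (dt m) a b z0 c = 0 /\
  dz (dx (dx m)) a b z0 c = 0 /\ dz (dy (dy m)) a b z0 c = 0.
Proof.
  intros HUo Hdom Hm Hz0 Hbc.
  assert (HU : forall a b c, in01 a -> in01 b -> 0 < c <= T -> U a b z0 c)
    by (intros; apply Hdom; unfold llg_dom; tauto).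
  assert (Hx : forall a b c, in01 a -> in01 b -> 0 < c <= T -> dz (dx m) a b z0 c = 0).
  { intros a b c Ha Hb Hc. rewrite <- (schwarz_xz U HUo) by auto.
    apply (side_zeroD (fun u => dz m u b z0 c) a in01).
    - exact (proj1 (sm_ex _ _ _ _ _ _ (sm_dz _ _ Hm) (HU _ _ _ Ha Hb Hc))).
    - intros s Hs. apply Hbc; auto.
    - auto.
    - apply accum01; auto. }
  assert (Hy : forall a b c, in01 a -> in01 b -> 0 < c <= T -> dz (dy m) a b z0 c = 0).
  { intros a b c Ha Hb Hc. rewrite <- (schwarz_yz U HUo) by auto.
    apply (side_zeroD (fun u => dz m a u z0 c) b in01).
    - exact (proj1 (proj2 (sm_ex _ _ _ _ _ _ (sm_dz _ _ Hm) (HU _ _ _ Ha Hb Hc)))).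
    - intros s Hs. apply Hbc; auto.
    - auto.
    - apply accum01; auto. }
  intros a b c Ha Hb Hc. split; [|split; [|split; [|split]]]; auto.
  - rewrite <- (schwarz_tz U HUo) by auto.
    apply (side_zeroD (fun u => dz m a b z0 u) c (fun c => 0 < c <= T)).
    + exact (proj2 (proj2 (proj2 (sm_ex _ _ _ _ _ _ (sm_dz _ _ Hm) (HU _ _ _ Ha Hb Hc))))).
    + intros s Hs. apply Hbc; auto.
    + auto.
    + apply accumT; auto.
  - rewrite <- (schwarz_xz U HUo) by (auto; apply sm_dx; auto).
    apply (side_zeroD (fun u => dz (dx m) u b z0 c) a in01).
    + exact (proj1 (sm_ex _ _ _ _ _ _ (sm_dz _ _ (sm_dx _ _ Hm)) (HU _ _ _ Ha Hb Hc))).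
    + intros s Hs. apply Hx; auto.
    + auto.
    + apply accum01; auto.
  - rewrite <- (schwarz_yz U HUo) by (auto; apply sm_dy; auto).
    apply (side_zeroD (fun u => dz (dy m) a u z0 c) b in01).
    + exact (proj1 (proj2 (sm_ex _ _ _ _ _ _ (sm_dz _ _ (sm_dy _ _ Hm)) (HU _ _ _ Ha Hb Hc)))).
    + intros s Hs. apply Hy; auto.
    + auto.
    + apply accum01; auto.
Qed.



Lemma isd_line U g x y z t l : smooth_on U g -> U x y z t -> dz g x y z t = l ->
  is_derive (fun u => g x y u t) z l.
Proof.
  intros Hg Hu E. subst l. apply (Derive_correct (fun u => g x y u t)).
  exact (proj1 (proj2 (proj2 (sm_ex _ _ _ _ _ _ Hg Hu)))).
Qed.

Lemma lap_d U m x y z t : smooth_on U m -> U x y z t ->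
  dz (dx (dx m)) x y z t = 0 -> dz (dy (dy m)) x y z t = 0 ->
  is_derive (fun u => lap m x y u t) z (dz (dz (dz m)) x y z t).
Proof.
  intros Hm Hu E1 E2. unfold lap.
  apply (isd_plus3 (fun u => dx (dx m) x y u t) (fun u => dy (dy m) x y u t) (fun u => dz (dz m) x y u t)
    z 0 0 (dz (dz (dz m)) x y z t)).
  - apply (isd_line U); auto. apply sm_dx, sm_dx; auto.
  - apply (isd_line U); auto. apply sm_dy, sm_dy; auto.
  - apply (isd_line U); auto. apply sm_dz, sm_dz; auto.
  - ring.
Qed.

Lemma grad_d U m x y z t : smooth_on U m -> U x y z t ->
  dz m x y z t = 0 -> dz (dx m) x y z t = 0 -> dz (dy m) x y z t = 0 ->
  is_derive (fun u => gradsq m x y u t) z 0.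
Proof.
  intros Hm Hu E0 E1 E2. unfold gradsq.
  apply (isd_plus3 (fun u => dx m x y u t ^ 2) (fun u => dy m x y u t ^ 2) (fun u => dz m x y u t ^ 2)
    z 0 0 0).
  - apply (isd_sq (fun u => dx m x y u t) z 0). apply (isd_line U); auto. apply sm_dx; auto. ring.
  - apply (isd_sq (fun u => dy m x y u t) z 0). apply (isd_line U); auto. apply sm_dy; auto. ring.
  - apply (isd_sq (fun u => dz m x y u t) z (dz (dz m) x y z t)). apply (isd_line U); auto. apply sm_dz; auto.
    rewrite E0; ring.
  - ring.
Qed.

Lemma face_z alpha T U m1 m2 m3 z0 : 0 < alpha -> open4 U ->
  (forall x y z t, llg_dom T x y z t -> U x y z t) ->
  smooth_on U m1 -> smooth_on U m2 -> smooth_on U m3 -> LLG alpha T m1 m2 m3 -> in01 z0 ->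
  (forall a b c, in01 a -> in01 b -> 0 < c <= T -> dz m1 a b z0 c = 0) ->
  (forall a b c, in01 a -> in01 b -> 0 < c <= T -> dz m2 a b z0 c = 0) ->
  (forall a b c, in01 a -> in01 b -> 0 < c <= T -> dz m3 a b z0 c = 0) ->
  forall x y t, in01 x -> in01 y -> 0 < t <= T ->
  dz (dz (dz m1)) x y z0 t = 0 /\ dz (dz (dz m2)) x y z0 t = 0 /\ dz (dz (dz m3)) x y z0 t = 0.
Proof.
  intros Ha HUo Hdom H1 H2 H3 Hllg Hz0 B1 B2 B3 x y t Hx Hy Ht.
  assert (Hu : U x y z0 t) by (apply Hdom; unfold llg_dom; tauto).
  destruct (face_facts U T m1 z0 HUo Hdom H1 Hz0 B1 x y t Hx Hy Ht) as (F1x & F1y & F1t & F1xx & F1yy).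
  destruct (face_facts U T m2 z0 HUo Hdom H2 Hz0 B2 x y t Hx Hy Ht) as (F2x & F2y & F2t & F2xx & F2yy).
  destruct (face_facts U T m3 z0 HUo Hdom H3 Hz0 B3 x y t Hx Hy Ht) as (F3x & F3y & F3t & F3xx & F3yy).
  pose proof (B1 x y t Hx Hy Ht) as Z1. pose proof (B2 x y t Hx Hy Ht) as Z2. pose proof (B3 x y t Hx Hy Ht) as Z3.
  pose proof (lap_d U m1 x y z0 t H1 Hu F1xx F1yy) as L1.
  pose proof (lap_d U m2 x y z0 t H2 Hu F2xx F2yy) as L2.
  pose proof (lap_d U m3 x y z0 t H3 Hu F3xx F3yy) as L3.
  assert (G : is_derive (fun u => gradsq3 m1 m2 m3 x y u t) z0 0).
  { unfold gradsq3.
    apply (isd_plus3 (fun u => gradsq m1 x y u t) (fun u => gradsq m2 x y u t) (fun u => gradsq m3 x y u t)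
      z0 0 0 0).
    - apply (grad_d U); auto.
    - apply (grad_d U); auto.
    - apply (grad_d U); auto.
    - ring. }
  assert (A1 : is_derive (fun u => m1 x y u t) z0 0) by (apply (isd_line U); auto).
  assert (A2 : is_derive (fun u => m2 x y u t) z0 0) by (apply (isd_line U); auto).
  assert (A3 : is_derive (fun u => m3 x y u t) z0 0) by (apply (isd_line U); auto).
  assert (D1 : is_derive (fun u => dt m1 x y u t) z0 0) by (apply (isd_line U); auto; apply sm_dt; auto).
  assert (D2 : is_derive (fun u => dt m2 x y u t) z0 0) by (apply (isd_line U); auto; apply sm_dt; auto).
  assert (D3 : is_derive (fun u => dt m3 x y u t) z0 0) by (apply (isd_line U); auto; apply sm_dt; auto).
  set (v1 := dz (dz (dz m1)) x y z0 t) in *.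
  set (v2 := dz (dz (dz m2)) x y z0 t) in *.
  set (v3 := dz (dz (dz m3)) x y z0 t) in *.
  assert (HL : forall s, in01 s ->
    dt m1 x y s t = - (m2 x y s t * lap m3 x y s t - m3 x y s t * lap m2 x y s t) + alpha * lap m1 x y s t + alpha * gradsq3 m1 m2 m3 x y s t * m1 x y s t /\
    dt m2 x y s t = - (m3 x y s t * lap m1 x y s t - m1 x y s t * lap m3 x y s t) + alpha * lap m2 x y s t + alpha * gradsq3 m1 m2 m3 x y s t * m2 x y s t /\
    dt m3 x y s t = - (m1 x y s t * lap m2 x y s t - m2 x y s t * lap m1 x y s t) + alpha * lap m3 x y s t + alpha * gradsq3 m1 m2 m3 x y s t * m3 x y s t).
  { intros s Hs. pose proof (Hllg x y s t) as HH. cbv zeta in HH. apply HH. unfold llg_dom; tauto. }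
  pose proof (side_zero _ _ _ in01 (derivE _ _ _ _ _ _ _ _ alpha z0 _ _ _ _ _ _ _ _ D1 A1 A2 A3 L1 L2 L3 G)) as E1.
  pose proof (side_zero _ _ _ in01 (derivE _ _ _ _ _ _ _ _ alpha z0 _ _ _ _ _ _ _ _ D2 A2 A3 A1 L2 L3 L1 G)) as E2.
  pose proof (side_zero _ _ _ in01 (derivE _ _ _ _ _ _ _ _ alpha z0 _ _ _ _ _ _ _ _ D3 A3 A1 A2 L3 L1 L2 G)) as E3.
  specialize (E1 ltac:(intros s Hs; cbv beta; destruct (HL s Hs) as (e1&e2&e3); rewrite e1; ring) Hz0 (accum01 _ Hz0)).
  specialize (E2 ltac:(intros s Hs; cbv beta; destruct (HL s Hs) as (e1&e2&e3); rewrite e2; ring) Hz0 (accum01 _ Hz0)).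
  specialize (E3 ltac:(intros s Hs; cbv beta; destruct (HL s Hs) as (e1&e2&e3); rewrite e3; ring) Hz0 (accum01 _ Hz0)).
  assert (h1 : alpha * v1 = m2 x y z0 t * v3 - m3 x y z0 t * v2) by lra.
  assert (h2 : alpha * v2 = m3 x y z0 t * v1 - m1 x y z0 t * v3) by lra.
  assert (h3 : alpha * v3 = m1 x y z0 t * v2 - m2 x y z0 t * v1) by lra.
  assert (S : alpha * (v1 * v1 + v2 * v2 + v3 * v3) = 0).
  { replace (alpha * (v1 * v1 + v2 * v2 + v3 * v3)) with (v1 * (alpha * v1) + v2 * (alpha * v2) + v3 * (alpha * v3)) by ring.
    rewrite h1, h2, h3. ring. }
  assert (S' : v1 * v1 + v2 * v2 + v3 * v3 = 0).
  { apply Rmult_eq_reg_l with alpha; lra. }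
  assert (0 <= v1 * v1) by apply Rle_0_sqr. assert (0 <= v2 * v2) by apply Rle_0_sqr.
  assert (0 <= v3 * v3) by apply Rle_0_sqr.
  repeat split; nra.
Qed.



Definition swxz (f : field) : field := fun x y z t => f z y x t.
Definition swyz (f : field) : field := fun x y z t => f x z y t.

Lemma Ck_swxz k : forall U f, Ck k U f -> Ck k (fun x y z t => U z y x t) (swxz f).
Proof.
  induction k as [|k IH]; intros U f H.
  - intros x y z t Hu eps He. destruct (H z y x t Hu eps He) as [d [Hd HH]].
    exists d; split; auto. intros. apply HH; auto.
  - destruct H as [Hc [He [Hx [Hy [Hz Ht]]]]]. split; [|split; [|split; [|split; [|split]]]].
    + intros x y z t Hu eps Hep. destruct (Hc z y x t Hu eps Hep) as [d [Hd HH]].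
      exists d; split; auto. intros. apply HH; auto.
    + intros x y z t Hu. destruct (He z y x t Hu) as (a&b&c&d). unfold swxz; tauto.
    + exact (IH _ _ Hz).
    + exact (IH _ _ Hy).
    + exact (IH _ _ Hx).
    + exact (IH _ _ Ht).
Qed.

Lemma Ck_swyz k : forall U f, Ck k U f -> Ck k (fun x y z t => U x z y t) (swyz f).
Proof.
  induction k as [|k IH]; intros U f H.
  - intros x y z t Hu eps He. destruct (H x z y t Hu eps He) as [d [Hd HH]].
    exists d; split; auto. intros. apply HH; auto.
  - destruct H as [Hc [He [Hx [Hy [Hz Ht]]]]]. split; [|split; [|split; [|split; [|split]]]].
    + intros x y z t Hu eps Hep. destruct (Hc x z y t Hu eps Hep) as [d [Hd HH]].
      exists d; split; auto. intros. apply HH; auto.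
    + intros x y z t Hu. destruct (He x z y t Hu) as (a&b&c&d). unfold swyz; tauto.
    + exact (IH _ _ Hx).
    + exact (IH _ _ Hz).
    + exact (IH _ _ Hy).
    + exact (IH _ _ Ht).
Qed.

Lemma lap_swxz m x y z t : lap (swxz m) x y z t = lap m z y x t.
Proof. unfold lap. change (dz (dz m) z y x t + dy (dy m) z y x t + dx (dx m) z y x t =
  dx (dx m) z y x t + dy (dy m) z y x t + dz (dz m) z y x t). ring. Qed.
Lemma lap_swyz m x y z t : lap (swyz m) x y z t = lap m x z y t.
Proof. unfold lap. change (dx (dx m) x z y t + dz (dz m) x z y t + dy (dy m) x z y t =
  dx (dx m) x z y t + dy (dy m) x z y t + dz (dz m) x z y t). ring. Qed.
Lemma gs_swxz m x y z t : gradsq (swxz m) x y z t = gradsq m z y x t.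
Proof. unfold gradsq. change ((dz m z y x t)^2 + (dy m z y x t)^2 + (dx m z y x t)^2 =
  (dx m z y x t)^2 + (dy m z y x t)^2 + (dz m z y x t)^2). ring. Qed.
Lemma gs_swyz m x y z t : gradsq (swyz m) x y z t = gradsq m x z y t.
Proof. unfold gradsq. change ((dx m x z y t)^2 + (dz m x z y t)^2 + (dy m x z y t)^2 =
  (dx m x z y t)^2 + (dy m x z y t)^2 + (dz m x z y t)^2). ring. Qed.

Lemma LLG_swxz alpha T m1 m2 m3 : LLG alpha T m1 m2 m3 -> LLG alpha T (swxz m1) (swxz m2) (swxz m3).
Proof.
  intros H x y z t Hd. cbv zeta. unfold gradsq3. rewrite !lap_swxz, !gs_swxz.
  assert (Hd' : llg_dom T z y x t) by (unfold llg_dom in *; tauto).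
  pose proof (H z y x t Hd') as HH. cbv zeta in HH. exact HH.
Qed.

Lemma LLG_swyz alpha T m1 m2 m3 : LLG alpha T m1 m2 m3 -> LLG alpha T (swyz m1) (swyz m2) (swyz m3).
Proof.
  intros H x y z t Hd. cbv zeta. unfold gradsq3. rewrite !lap_swyz, !gs_swyz.
  assert (Hd' : llg_dom T x z y t) by (unfold llg_dom in *; tauto).
  pose proof (H x z y t Hd') as HH. cbv zeta in HH. exact HH.
Qed.

Lemma open_swxz U : open4 U -> open4 (fun x y z t => U z y x t).
Proof. intros H x y z t Hu. destruct (H z y x t Hu) as [d [Hd HH]]. exists d; split; auto. Qed.
Lemma open_swyz U : open4 U -> open4 (fun x y z t => U x z y t).
Proof. intros H x y z t Hu. destruct (H x z y t Hu) as [d [Hd HH]]. exists d; split; auto. Qed.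

Lemma faces3 alpha T U m1 m2 m3 : 0 < alpha -> open4 U ->
  (forall x y z t, llg_dom T x y z t -> U x y z t) ->
  smooth_on U m1 -> smooth_on U m2 -> smooth_on U m3 -> LLG alpha T m1 m2 m3 ->
  neumann_bc T m1 -> neumann_bc T m2 -> neumann_bc T m3 ->
  third_normal_zero T m1 /\ third_normal_zero T m2 /\ third_normal_zero T m3.
Proof.
  intros Ha HUo Hdom S1 S2 S3 HL N1 N2 N3.
  assert (Z : forall z0, in01 z0 -> (z0 = 0 \/ z0 = 1) -> forall x y t, in01 x -> in01 y -> 0 < t <= T ->
    dz (dz (dz m1)) x y z0 t = 0 /\ dz (dz (dz m2)) x y z0 t = 0 /\ dz (dz (dz m3)) x y z0 t = 0).
  { intros z0 Hz0 Hz. apply (face_z alpha T U); auto;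
      intros a b c Ha' Hb Hc; [destruct N1 as (_&_&N)|destruct N2 as (_&_&N)|destruct N3 as (_&_&N)];
      destruct (N a b c Ha' Hb Hc); destruct Hz; subst; auto. }
  assert (X : forall z0, in01 z0 -> (z0 = 0 \/ z0 = 1) -> forall x y t, in01 x -> in01 y -> 0 < t <= T ->
    dx (dx (dx m1)) z0 y x t = 0 /\ dx (dx (dx m2)) z0 y x t = 0 /\ dx (dx (dx m3)) z0 y x t = 0).
  { intros z0 Hz0 Hz. apply (face_z alpha T (fun x y z t => U z y x t) (swxz m1) (swxz m2) (swxz m3)); auto.
    - apply open_swxz; auto.
    - intros x y z t Hd; apply Hdom; unfold llg_dom in *; tauto.
    - intro k; apply Ck_swxz; auto.
    - intro k; apply Ck_swxz; auto.
    - intro k; apply Ck_swxz; auto.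
    - apply LLG_swxz; auto.
    - intros a b c Ha' Hb Hc; destruct N1 as (N&_&_); destruct (N b a c Hb Ha' Hc); destruct Hz; subst; auto.
    - intros a b c Ha' Hb Hc; destruct N2 as (N&_&_); destruct (N b a c Hb Ha' Hc); destruct Hz; subst; auto.
    - intros a b c Ha' Hb Hc; destruct N3 as (N&_&_); destruct (N b a c Hb Ha' Hc); destruct Hz; subst; auto. }
  assert (Y : forall z0, in01 z0 -> (z0 = 0 \/ z0 = 1) -> forall x y t, in01 x -> in01 y -> 0 < t <= T ->
    dy (dy (dy m1)) x z0 y t = 0 /\ dy (dy (dy m2)) x z0 y t = 0 /\ dy (dy (dy m3)) x z0 y t = 0).
  { intros z0 Hz0 Hz. apply (face_z alpha T (fun x y z t => U x z y t) (swyz m1) (swyz m2) (swyz m3)); auto.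
    - apply open_swyz; auto.
    - intros x y z t Hd; apply Hdom; unfold llg_dom in *; tauto.
    - intro k; apply Ck_swyz; auto.
    - intro k; apply Ck_swyz; auto.
    - intro k; apply Ck_swyz; auto.
    - apply LLG_swyz; auto.
    - intros a b c Ha' Hb Hc; destruct N1 as (_&N&_); destruct (N a b c Ha' Hb Hc); destruct Hz; subst; auto.
    - intros a b c Ha' Hb Hc; destruct N2 as (_&N&_); destruct (N a b c Ha' Hb Hc); destruct Hz; subst; auto.
    - intros a b c Ha' Hb Hc; destruct N3 as (_&N&_); destruct (N a b c Ha' Hb Hc); destruct Hz; subst; auto. }
  assert (I0 : in01 0) by (unfold in01; lra). assert (I1 : in01 1) by (unfold in01; lra).
  unfold third_normal_zero.
  repeat split; intros.
  all: lazymatch goal with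
  | |- dx (dx (dx ?m)) ?z0 ?b ?a ?c = 0 =>
      let e := constr:(X z0 ltac:(assumption) ltac:(auto) a b c ltac:(assumption) ltac:(assumption) ltac:(assumption)) in
      first [constr_eq m m1; exact (proj1 e) | constr_eq m m2; exact (proj1 (proj2 e)) | constr_eq m m3; exact (proj2 (proj2 e))]
  | |- dy (dy (dy ?m)) ?a ?z0 ?b ?c = 0 =>
      let e := constr:(Y z0 ltac:(assumption) ltac:(auto) a b c ltac:(assumption) ltac:(assumption) ltac:(assumption)) in
      first [constr_eq m m1; exact (proj1 e) | constr_eq m m2; exact (proj1 (proj2 e)) | constr_eq m m3; exact (proj2 (proj2 e))]
  | |- dz (dz (dz ?m)) ?a ?b ?z0 ?c = 0 =>
      let e := constr:(Z z0 ltac:(assumption) ltac:(auto) a b c ltac:(assumption) ltac:(assumption) ltac:(assumption)) in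
      first [constr_eq m m1; exact (proj1 e) | constr_eq m m2; exact (proj1 (proj2 e)) | constr_eq m m3; exact (proj2 (proj2 e))]
  end.
Qed.



Lemma loc_lt d u : Rabs u < d -> locally u (fun y => Rabs y < d).
Proof.
  intros H. assert (Hp : 0 < d - Rabs u) by lra.
  assert (L : forall a b : R, Rabs (a - b) < d - Rabs b -> Rabs a < d).
  { intros a b Hab. pose proof (Rabs_triang (a - b) b) as T. replace (a - b + b) with a in T by ring. lra. }
  exists (mkposreal _ Hp). intros y Hy. apply (L y u). exact Hy.
Qed.

Lemma odd5 (g : R -> R) d : 0 < d ->
  (forall s k, Rabs s < d -> ex_derive (Derive_n g k) s) ->
  Derive_n g 1 0 = 0 -> Derive_n g 3 0 = 0 ->
  exists C h0, 0 < h0 /\ forall h, 0 < h < h0 -> Rabs (g (-(h/2)) - g (h/2)) <= C * h ^ 5.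
Proof.
  intros Hd Hg D1 D3.
  set (f := fun u => g (- u)).
  assert (Hopp : forall n u, Rabs u < d -> Derive_n f n u = (-1) ^ n * Derive_n g n (- u)).
  { intros n u Hu. apply Derive_n_comp_opp.
    eapply filter_imp; [|apply loc_lt; rewrite Rabs_Ropp; exact Hu].
    intros y Hy k Hk. destruct k; [exact I|]. apply Hg; auto. }
  assert (Hf : forall s k, Rabs s < d -> ex_derive (Derive_n f k) s).
  { intros s k Hs.
    apply ex_derive_ext_loc with (f := fun u => (-1) ^ k * Derive_n g k (- u)).
    - eapply filter_imp; [|apply loc_lt; exact Hs]. intros y Hy. rewrite Hopp; auto.
    - apply ex_derive_scal. apply (ex_derive_comp (Derive_n g k) (fun u => - u)).
      + apply Hg. rewrite Rabs_Ropp; auto.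
      + auto_derive; auto. }
  set (g5 := Derive_n g 5).
  assert (Hc : forall c, - (d/2) <= c <= d/2 -> continuity_pt (fun c => Rabs (g5 c)) c).
  { intros c Hcc. apply (continuity_pt_comp g5 Rabs). 
    - apply continuity_pt_filterlim.
      assert (Hr : Rabs c < d) by (destruct Hcc; apply Rabs_def1; lra).
      exact (ex_derive_continuous g5 c (Hg c 5%nat Hr)).
    - apply Rcontinuity_abs. }
  destruct (continuity_ab_maj (fun c => Rabs (g5 c)) (-(d/2)) (d/2) ltac:(lra) Hc) as [Mx [HM _]].
  set (M := Rabs (g5 Mx)).
  exists (2 * M / 120 / 32), d. split; auto.
  intros h Hh. set (s := h / 2).
  assert (Hs : 0 < s < d / 2) by (unfold s; lra).
  destruct (Taylor_Lagrange g 4 0 s ltac:(lra)) as [z2 [Hz2 Tg]].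
  { intros t Ht k Hk. destruct k; [exact I|]. apply Hg. rewrite Rabs_pos_eq; lra. }
  destruct (Taylor_Lagrange f 4 0 s ltac:(lra)) as [z1 [Hz1 Tf]].
  { intros t Ht k Hk. destruct k; [exact I|]. apply Hf. rewrite Rabs_pos_eq; lra. }
  assert (R0d : Rabs 0 < d) by (rewrite Rabs_R0; lra).
  assert (Hdiff : g (- s) - g s = s ^ 5 / INR (Factorial.fact 5) * (Derive_n f 5 z1 - Derive_n g 5 z2)).
  { change (g (- s)) with (f s). rewrite Tf, Tg.
    rewrite (sum_eq _ (fun m => (s - 0) ^ m / INR (Factorial.fact m) * ((-1) ^ m * Derive_n g m 0))).
    2: { intros i _. rewrite Hopp, Ropp_0; auto. }
    cbn [sum_f_R0]. rewrite D1, D3. match goal with |- ?a = ?b => change (@eq R a b) end. clearbody s f g5 M. clear -D1. generalize (Derive_n g 0 0) (Derive_n g 2 0) (Derive_n g 4 0) (Derive_n f 5 z1) (Derive_n g 5 z2) (INR (Factorial.fact 0)) (INR (Factorial.fact 1)) (INR (Factorial.fact 2)) (INR (Factorial.fact 3)) (INR (Factorial.fact 4)) (INR (Factorial.fact 5)). intros. unfold Rdiv. ring. }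
  rewrite Hopp in Hdiff by (rewrite Rabs_pos_eq; lra).
  assert (B1 : Rabs (g5 (- z1)) <= M) by (apply HM; lra).
  assert (B2 : Rabs (g5 z2) <= M) by (apply HM; lra).
  change (- (h / 2)) with (- s). rewrite Hdiff.
  replace (INR (Factorial.fact 5)) with 120 by (rewrite INR_IZR_INZ; simpl; reflexivity).
  replace ((-1) ^ 5 * Derive_n g 5 (- z1) - Derive_n g 5 z2) with (- (g5 (- z1) + g5 z2)) by (unfold g5; ring).
  rewrite Rabs_mult, Rabs_Ropp.
  assert (Rabs (g5 (- z1) + g5 z2) <= 2 * M) by (pose proof (Rabs_triang (g5 (- z1)) (g5 z2)); lra).
  assert (0 < s ^ 5) by (apply pow_lt; lra).
  rewrite Rabs_pos_eq by (apply Rmult_le_pos; [apply Rlt_le; auto| lra]).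
  replace (2 * M / 120 / 32 * h ^ 5) with (s ^ 5 / 120 * (2 * M)) by (unfold s; field).
  apply Rmult_le_compat_l; [|auto]. apply Rmult_le_pos; lra.
Qed.



Fixpoint dzn (k : nat) (m : field) : field :=
  match k with O => m | S k => dz (dzn k m) end.

Lemma Dn_line m x y t : forall k u, Derive_n (fun v => m x y v t) k u = dzn k m x y u t.
Proof.
  induction k as [|k IH]; intros u; [reflexivity|].
  change (Derive (Derive_n (fun v => m x y v t) k) u = dz (dzn k m) x y u t).
  unfold dz. apply Derive_ext. intros; apply IH.
Qed.

Lemma sm_dzn U m k : smooth_on U m -> smooth_on U (dzn k m).
Proof. induction k; simpl; auto. intros; apply sm_dz; auto. Qed.

Lemma odd_comp T U m x y t : open4 U -> (forall x y z t, llg_dom T x y z t -> U x y z t) ->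
  smooth_on U m -> in01 x -> in01 y -> 0 < t <= T ->
  dz m x y 0 t = 0 -> dz (dz (dz m)) x y 0 t = 0 ->
  exists C h0, 0 < h0 /\ forall h, 0 < h < h0 -> Rabs (m x y (-(h/2)) t - m x y (h/2) t) <= C * h ^ 5.
Proof.
  intros HUo Hdom Hm Hx Hy Ht B1 B3.
  assert (Hu : U x y 0 t) by (apply Hdom; unfold llg_dom, in01 in *; repeat split; lra).
  destruct (HUo _ _ _ _ Hu) as [d [Hd HH]].
  apply (odd5 (fun v => m x y v t) d Hd).
  - intros s k Hs. apply ex_derive_ext with (f := fun v => dzn k m x y v t).
    + intros v; symmetry; apply Dn_line.
    + assert (Hs' : U x y s t) by (apply HH; rewrite ?Rminus_0_r, ?Rminus_eq_0, ?Rabs_R0; auto).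
      exact (proj1 (proj2 (proj2 (sm_ex _ _ _ _ _ _ (sm_dzn U m k Hm) Hs')))).
  - rewrite Dn_line. exact B1.
  - rewrite Dn_line. exact B3.
Qed.

Theorem mainTheorem5
  (alpha T : R) (U : R -> R -> R -> R -> Prop) (m1 m2 m3 : field)
  (Halpha : 0 < alpha) (HT : 0 < T)
  (HUopen : open4 U)
  (HUdom : forall x y z t, llg_dom T x y z t -> U x y z t)
  (Hs1 : smooth_on U m1) (Hs2 : smooth_on U m2) (Hs3 : smooth_on U m3)
  (Hllg : LLG alpha T m1 m2 m3)
  (Hbc1 : neumann_bc T m1) (Hbc2 : neumann_bc T m2) (Hbc3 : neumann_bc T m3)
  (Hunit : forall x y z t, llg_dom T x y z t ->
     (m1 x y z t)^2 + (m2 x y z t)^2 + (m3 x y z t)^2 = 1) :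
  (third_normal_zero T m1 /\ third_normal_zero T m2 /\ third_normal_zero T m3) /\
  (forall x y t, in01 x -> in01 y -> 0 < t <= T ->
     exists C h0, 0 < h0 /\ forall h, 0 < h < h0 ->
       Rabs (m1 x y (- (h / 2)) t - m1 x y (h / 2) t) <= C * h ^ 5 /\
       Rabs (m2 x y (- (h / 2)) t - m2 x y (h / 2) t) <= C * h ^ 5 /\
       Rabs (m3 x y (- (h / 2)) t - m3 x y (h / 2) t) <= C * h ^ 5).
Proof.
  pose proof (faces3 alpha T U m1 m2 m3 Halpha HUopen HUdom Hs1 Hs2 Hs3 Hllg Hbc1 Hbc2 Hbc3) as P1.
  split; [exact P1|].
  intros x y t Hx Hy Ht.
  destruct P1 as ((_&_&Z1)&(_&_&Z2)&(_&_&Z3)).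
  destruct Hbc1 as (_&_&N1). destruct Hbc2 as (_&_&N2). destruct Hbc3 as (_&_&N3).
  destruct (odd_comp T U m1 x y t HUopen HUdom Hs1 Hx Hy Ht (proj1 (N1 x y t Hx Hy Ht)) (proj1 (Z1 x y t Hx Hy Ht)))
    as [C1 [h1 [Hh1 K1]]].
  destruct (odd_comp T U m2 x y t HUopen HUdom Hs2 Hx Hy Ht (proj1 (N2 x y t Hx Hy Ht)) (proj1 (Z2 x y t Hx Hy Ht)))
    as [C2 [h2 [Hh2 K2]]].
  destruct (odd_comp T U m3 x y t HUopen HUdom Hs3 Hx Hy Ht (proj1 (N3 x y t Hx Hy Ht)) (proj1 (Z3 x y t Hx Hy Ht)))
    as [C3 [h3 [Hh3 K3]]].
  exists (Rmax C1 (Rmax C2 C3)), (Rmin h1 (Rmin h2 h3)).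
  split; [apply Rmin_pos; [|apply Rmin_pos]; auto|].
  intros h Hh.
  pose proof (Rmin_l h1 (Rmin h2 h3)). pose proof (Rmin_r h1 (Rmin h2 h3)).
  pose proof (Rmin_l h2 h3). pose proof (Rmin_r h2 h3).
  pose proof (Rmax_l C1 (Rmax C2 C3)). pose proof (Rmax_r C1 (Rmax C2 C3)).
  pose proof (Rmax_l C2 C3). pose proof (Rmax_r C2 C3).
  assert (Hp : 0 < h ^ 5) by (apply pow_lt; lra).
  assert (L : forall c, c <= Rmax C1 (Rmax C2 C3) -> c * h ^ 5 <= Rmax C1 (Rmax C2 C3) * h ^ 5)
    by (intros; apply Rmult_le_compat_r; lra).
  split; [|split].
  - eapply Rle_trans; [apply K1; lra|]. apply L; lra.
  - eapply Rle_trans; [apply K2; lra|]. apply L; lra.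
  - eapply Rle_trans; [apply K3; lra|]. apply L; lra.
Qed.
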